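(* Let $\Sigma$ be a predictive theory and $A \Rightarrow B$ a predictive formula. Put $\Sigma_{A}^B = \{E+i \Rightarrow F+i \mid E \Rightarrow F \in \Sigma,\ i \in \mathbb{Z},\ l(A)-l(E) \leq i \leq u(B)-l(F)\}$. Then $\Sigma \vdash A \Rightarrow B$ if and only if $\Sigma_{A}^B \vdash_\mathcal{R} A \Rightarrow B$, where $\mathcal{R}$ is the deduction system consisting of (Ax) and (Cut).
   Context: $Y$ is a non-empty finite set of attributes and $\mathcal{T}_Y = \{y^i \mid y \in Y, i \in \mathbb{Z}\}$; $M + j = \{y^{i+j} \mid y^i \in M\}$. A formula is $A \Rightarrow B$ with $A,B$ finite subsets of $\mathcal{T}_Y$; a theory is a set of formulas. For finite non-empty $M \subseteq \mathcal{T}_Y$, $l(M) = \min\{i \mid y^i \in M\}$ and $u(M) = \max\{i \mid y^i \in M\}$. A formula $A \Rightarrow B$ is predictive if $A \neq \emptyset$, $B \neq \emptyset$ and $i \leq j$ for all $x^i \in A$, $y^j \in B$ (equivalently $u(A) \le l(B)$); a theory is predictive if all its formulas are. Deduction rules (for arbitrary finite $A,B,C,D \subseteq \mathcal{T}_Y$, $i \in \mathbb{Z}$): (Ax) infer $A \cup B \Rightarrow A$; (Cut) from $A \Rightarrow B$ and $B \cup C \Rightarrow D$ infer $A \cup C \Rightarrow D$; (Shf) from $A \Rightarrow B$ infer $A+i \Rightarrow B+i$. For a set of rules $\mathcal{R}$, $\Sigma \vdash_\mathcal{R} A \Rightarrow B$ means there is a finite sequence ending with $A \Rightarrow B$ each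 member of which is in $\Sigma$ or follows from earlier members by a rule of $\mathcal{R}$; $\vdash$ denotes $\vdash_\mathcal{R}$ for $\mathcal{R}$ = \{(Ax), (Cut), (Shf)\}. *)

(* Defs.v *)
From HB Require Import structures.
From mathcomp Require Import all_boot all_order all_algebra.
From mathcomp Require Import finmap.
Set Implicit Arguments. Unset Strict Implicit. Unset Printing Implicit Defensive.
Import Order.TTheory GRing.Theory Num.Theory.
Local Open Scope fset_scope.
Local Open Scope ring_scope.

(* Temporal attributes y^i are pairs (y, i) : Y * int; finite subsets of T_Y
   are finite sets {fset (Y * int)}. *)
Section Defs.
Variable Y : finType.

Definition tattr := (Y * int)%type.
Definition fmla := ({fset tattr} * {fset tattr})%type.  (* (A, B) is A => B *)
Definition theory := fmla -> Prop.

Definition shift (M : {fset tattr}) (j : int) : {fset tattr} :=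
  [fset (x.1, x.2 + j) | x in M].

(* l(M) and u(M) (meaningful for non-empty M) *)
Definition lo (M : {fset tattr}) : int :=
  let s := [seq x.2 | x <- M] in foldr Num.min (head 0 s) s.
Definition up (M : {fset tattr}) : int :=
  let s := [seq x.2 | x <- M] in foldr Num.max (head 0 s) s.

Definition predictive_fmla (f : fmla) : Prop :=
  f.1 != fset0 /\ f.2 != fset0 /\
  (forall x y, x \in f.1 -> y \in f.2 -> x.2 <= y.2).

Definition predictive_theory (S : theory) : Prop :=
  forall f, S f -> predictive_fmla f.

(* Provability from S using (Ax), (Cut), and (Shf) iff [shf = true]. *)
Inductive derives (shf : bool) (S : theory) : fmla -> Prop :=
| d_hyp f : S f -> derives shf S f
| d_ax (A B : {fset tattr}) : derives shf S (A `|` B, A)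
| d_cut (A B C D : {fset tattr}) :
    derives shf S (A, B) -> derives shf S (B `|` C, D) -> derives shf S (A `|` C, D)
| d_shf (A B : {fset tattr}) (i : int) :
    shf -> derives shf S (A, B) -> derives shf S (shift A i, shift B i).

Definition restrict_theory (S : theory) (A B : {fset tattr}) : theory :=
  fun f => exists (E F : {fset tattr}) (i : int),
    S (E, F) /\ lo A - lo E <= i /\ i <= up B - lo F /\
    f = (shift E i, shift F i).
End Defs.

(* Main.v *)
Require Import Defs.
From HB Require Import structures.
From mathcomp Require Import all_boot all_order all_algebra.
From mathcomp Require Import finmap.
Set Implicit Arguments. Unset Strict Implicit. Unset Printing Implicit Defensive.
Import Order.TTheory GRing.Theory Num.Theory.
Local Open Scope fset_scope.
Local Open Scope ring_scope.

Section Aux.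
Variable Y : finType.
Implicit Types (S G : theory Y) (M A B C D E F X : {fset tattr Y}).

Lemma der_eq b G X1 Y1 X2 Y2 : derives b G (X1, Y1) -> X1 = X2 -> Y1 = Y2 ->
  derives b G (X2, Y2).
Proof. by move=> H <- <-. Qed.

Lemma der_weak b G A F D : derives b G (A, F) -> D `<=` F -> derives b G (A, D).
Proof.
move=> H sub.
have H2 : derives b G (F `|` fset0, D).
  apply: der_eq (d_ax b G D F) _ _ => //; rewrite fsetU0; exact/fsetUidPr.
by apply: der_eq (d_cut H H2) _ _ => //; rewrite fsetU0.
Qed.

Lemma der_union b G A B1 B2 : derives b G (A, B1) -> derives b G (A, B2) ->
  derives b G (A, B1 `|` B2).
Proof.
move=> H1 H2.
have H3 : derives b G (B2 `|` B1, B1 `|` B2).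
  by apply: der_eq (d_ax b G (B1 `|` B2) fset0) _ _; rewrite ?fsetU0 // fsetUC.
have H4 := d_cut H2 H3.
have H5 : derives b G (B1 `|` A, B1 `|` B2) by apply: der_eq H4 _ _; rewrite // fsetUC.
by apply: der_eq (d_cut H1 H5) _ _; rewrite // fsetUid.
Qed.

Lemma der_empty b G A : derives b G (A, fset0).
Proof. by apply: der_eq (d_ax b G fset0 A) _ _; rewrite ?fset0U. Qed.

Lemma der_all b G A X : (forall x, x \in X -> derives b G (A, [fset x])) ->
  derives b G (A, X).
Proof.
elim/fset1U_rect: X => [|x X _ IH] H; first exact: der_empty.
apply: der_union; first by apply: H; rewrite fset1U1.
by apply: IH => y yX; apply: H; rewrite fset1Ur.
Qed.

Inductive cl G A : tattr Y -> Prop :=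
| cl_base x : x \in A -> cl G A x
| cl_rule E F x : G (E, F) -> (forall e, e \in E -> cl G A e) -> x \in F -> cl G A x.

Lemma cl_der b G A x : cl G A x -> derives b G (A, [fset x]).
Proof.
elim => {x} [x xA|E F x GEF _ IH xF].
  apply: der_weak (der_eq (d_ax b G A fset0) (fsetU0 A) (erefl A)) _.
  by rewrite fsub1set.
have HE := der_all IH.
have HF : derives b G (A, F).
  have H1 : derives b G (E `|` fset0, F) by rewrite fsetU0; exact: d_hyp.
  by apply: der_eq (d_cut HE H1) _ _; rewrite ?fsetU0.
by apply: der_weak HF _; rewrite fsub1set.
Qed.

Lemma der_cl G f : derives false G f ->
  forall P : tattr Y -> Prop,
  (forall E F, G (E, F) -> (forall e, e \in E -> P e) -> forall x, x \in F -> P x) ->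
  (forall c, c \in f.1 -> P c) -> forall d, d \in f.2 -> P d.
Proof.
elim => {f} [f Gf|A0 B0|A0 B0 C0 D0 _ IH1 _ IH2|A0 B0 i //] P cP /=.
- by case: f Gf => E F /= GEF; apply: cP.
- by move=> H d dA; apply: H; rewrite in_fsetU dA.
- move=> H; apply: IH2 => // c; rewrite in_fsetU => /orP [cB|cC].
    by apply: (IH1 P cP) => // a aA; apply: H; rewrite in_fsetU aA.
  by apply: H; rewrite in_fsetU cC orbT.
Qed.

Lemma shiftU M1 M2 j : shift (M1 `|` M2) j = shift M1 j `|` shift M2 j.
Proof. exact: imfsetU. Qed.

Lemma shift_shift M i j : shift (shift M i) j = shift M (i + j).
Proof.
apply/fsetP => x; apply/imfsetP/imfsetP => [[/= y /imfsetP [/= z zM ->] ->]|[/= z zM ->]].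
  by exists z => //; rewrite addrA.
by exists (z.1, z.2 + i); [apply/imfsetP; exists z | rewrite /= addrA].
Qed.

Lemma shift0 M : shift M 0 = M.
Proof.
apply/fsetP => x; apply/imfsetP/idP => [[/= y yM ->]|xM].
  by rewrite addr0 -surjective_pairing.
by exists x => //; rewrite addr0 -surjective_pairing.
Qed.

Definition allshifts S : theory Y :=
  fun f => exists E F (i : int), S (E, F) /\ f = (shift E i, shift F i).

Lemma der_shifts S f : derives true S f ->
  forall j, derives false (allshifts S) (shift f.1 j, shift f.2 j).
Proof.
elim => {f} [f Sf|A0 B0|A0 B0 C0 D0 _ IH1 _ IH2|A0 B0 i _ _ IH] j /=.
- apply: d_hyp; case: f Sf => E F SEF; by exists E, F, j.
- by rewrite shiftU; apply: d_ax.
- rewrite shiftU; apply: d_cut (IH1 j) _; by rewrite -shiftU; apply: IH2.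
- by rewrite !shift_shift; apply: IH.
Qed.

Lemma foldr_min_le (s : seq int) init : foldr Num.min init s <= init /\
  forall y, y \in s -> foldr Num.min init s <= y.
Proof.
elim: s => [|a s [IH1 IH2]] /=; first by split.
split; first by rewrite ge_min IH1 orbT.
by move=> y; rewrite inE => /orP [/eqP ->|ys]; rewrite ge_min ?lexx // IH2 ?orbT.
Qed.

Lemma foldr_max_ge (s : seq int) init : init <= foldr Num.max init s /\
  forall y, y \in s -> y <= foldr Num.max init s.
Proof.
elim: s => [|a s [IH1 IH2]] /=; first by split.
split; first by rewrite le_max IH1 orbT.
by move=> y; rewrite inE => /orP [/eqP ->|ys]; rewrite le_max ?lexx // IH2 ?orbT.
Qed.

Lemma foldr_min_in (s : seq int) init : foldr Num.min init s \in init :: s.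
Proof.
elim: s => [|a s IH] /=; first by rewrite inE.
rewrite {1}/Order.min; case: ifP => _; first by rewrite !inE eqxx orbT.
move: IH; rewrite !inE => /orP [->|->] //; by rewrite !orbT.
Qed.

Lemma lo_le M x : x \in M -> lo M <= x.2.
Proof.
move=> xM; rewrite /lo; apply: (foldr_min_le _ _).2.
by apply/mapP; exists x.
Qed.

Lemma up_ge M x : x \in M -> x.2 <= up M.
Proof.
move=> xM; rewrite /up; apply: (foldr_max_ge _ _).2.
by apply/mapP; exists x.
Qed.

Lemma lo_attained M : M != fset0 -> exists2 x, x \in M & x.2 = lo M.
Proof.
move=> /fset0Pn [y yM].
have : lo M \in [seq x.2 | x <- M].
  rewrite /lo; set s := [seq x.2 | x <- M].
  have hs : head 0 s \in s.
    case E : s => [|a s'] /=; last by rewrite inE eqxx.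
    have : y.2 \in s by apply/mapP; exists y.
    by rewrite E.
  have := foldr_min_in s (head 0 s); rewrite inE => /orP [/eqP ->|] //.
by move=> /mapP [x xM ->]; exists x.
Qed.

Lemma shift_mem M i x : x \in shift M i -> exists2 y, y \in M & x = (y.1, y.2 + i).
Proof. by move=> /imfsetP [/= y yM ->]; exists y. Qed.

End Aux.

From mathcomp Require Import zify.

Lemma cl_restrict (Y : finType) (S : theory Y) (A B : {fset tattr Y}) :
  predictive_theory S -> forall x, cl (allshifts S) A x ->
  lo A <= x.2 /\ (x.2 <= up B -> cl (restrict_theory S A B) A x).
Proof.
move=> pS x; elim => {x} [x xA|E' F' x [E [F [i [SEF eq]]]] _ IH xF'].
  by split; [exact: lo_le | move=> _; exact: cl_base].
case: eq => eE eF; subst E' F'.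
have [nE [nF cross]] := pS _ SEF; simpl in nE, nF, cross.
have [y yF ->] := shift_mem xF'.
have [e0 e0E e0lo] := lo_attained nE.
have e0' : (e0.1, e0.2 + i) \in shift E i by apply/imfsetP; exists e0.
have [h0 _] := IH _ e0'.
have ey := cross _ _ e0E yF.
simpl in h0, ey |- *.
split; first by lia.
move=> hup; apply: (@cl_rule _ _ _ (shift E i) (shift F i)).
- exists E, F, i; split => //; split; last split => //.
    by move: h0; rewrite e0lo; lia.
  rewrite lerBrDr addrC; apply: le_trans hup; rewrite lerD2r; exact: lo_le yF.
- move=> e /shift_mem [z zE ->].
  have zy := cross _ _ zE yF.
  have zin : (z.1, z.2 + i) \in shift E i by apply/imfsetP; exists z.
  apply: (IH _ zin).2 => /=; lia.
- by apply/imfsetP; exists y.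
Qed.

Lemma der_back (Y : finType) (S : theory Y) (A B : {fset tattr Y}) f :
  derives false (restrict_theory S A B) f -> derives true S f.
Proof.
elim => {f} [f [E [F [i [SEF H]]]]|A0 B0|A0 B0 C0 D0 _ IH1 _ IH2|A0 B0 i //].
- case: H => [_ [_ ->]]. apply: d_shf => //; exact: d_hyp.
- exact: d_ax.
- exact: d_cut IH1 IH2.
Qed.

Theorem theorem14 (Y : finType) (hY : (0 < #|Y|)%N) (S : theory Y)
    (A B : {fset tattr Y}) :
  predictive_theory S -> predictive_fmla (A, B) ->
  (derives true S (A, B) <-> derives false (restrict_theory S A B) (A, B)).
Proof.
move=> pS _; split; last exact: der_back.
move=> H; have H1 := der_shifts H 0; rewrite /= !shift0 in H1.
apply: der_all => x xB; apply: cl_der.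
have cx : cl (allshifts S) A x.
  apply: (der_cl H1 (P := cl (allshifts S) A)) => //.
  - move=> E F SEF hE z zF; exact: cl_rule SEF hE zF.
  - move=> c cA; exact: cl_base.
apply: (cl_restrict B pS cx).2; exact: up_ge.
Qed.
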